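(* For all $n\ge1$ and all $k,k'\in[n]$, the relations $\preceq_k$ and $\preceq_{k'}$ on $\mathfrak{S}_n$ coincide; that is, the posets $\textsf{Star}_k(n)$ and $\textsf{Star}_{k'}(n)$ are equal.
   Context: $\mathfrak{S}_n$ is the symmetric group on $[n]$, products taken right to left. For a pivot $k\in[n]$, a star factorization of $\pi\in\mathfrak{S}_n$ is an expression $\pi=g_1\cdots g_r$ with each $g_i$ a transposition $(k\ i)$, $i\neq k$; it is transitive if all $(k\ i)$, $i\in[n]\setminus\{k\}$, occur; $\star_k(\pi)$ is the set of transitive star factorizations of $\pi$ of the minimum possible length $n+m-2$, $m$ the number of cycles of $\pi$ (fixed points included). $\sigma\preceq_k\pi$ means there exist $\gamma\in\star_k(\sigma)$ and $\delta\in\star_k(\pi)$ with $\gamma$ a not necessarily contiguous subword of $\delta$; $\textsf{Star}_k(n)$ is $\mathfrak{S}_n$ with the relation $\preceq_k$. *)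

(* Defs.v *)
From mathcomp Require Import all_boot all_fingroup.
Set Implicit Arguments. Unset Strict Implicit. Unset Printing Implicit Defensive.
Local Open Scope group_scope.

(* Product of a word of permutations, taken right to left:
   prodRL [:: g1; ...; gr] acts as x |-> g1 (g2 (... (gr x))).
   (MathComp's s * t is "first s, then t", hence the order below.) *)
Definition prodRL (T : finType) (s : seq {perm T}) : {perm T} :=
  foldr (fun g acc => acc * g) 1 s.

(* Number of cycles of pi, fixed points included. *)
Definition ncycles (T : finType) (pi : {perm T}) : nat := #|porbits pi|.

Definition is_star_fact (n : nat) (k : 'I_n) (pi : {perm 'I_n})
    (s : seq {perm 'I_n}) : bool :=
  [&& all (fun g => [exists i : 'I_n, (i != k) && (g == tperm k i)]) s,
      [forall i : 'I_n, (i != k) ==> (tperm k i \in s)],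
      size s == n + ncycles pi - 2
    & prodRL s == pi].

Definition star_le (n : nat) (k : 'I_n) (sigma pi : {perm 'I_n}) : Prop :=
  exists gamma delta : seq {perm 'I_n},
    [/\ is_star_fact k sigma gamma, is_star_fact k pi delta & subseq gamma delta].

(* Main.v *)
Require Import Defs.
From mathcomp Require Import all_boot all_fingroup zify.
Set Implicit Arguments. Unset Strict Implicit. Unset Printing Implicit Defensive.

Section S.
Variable n : nat.
Implicit Types (k c z : 'I_n) (s x : {perm 'I_n}) (w u v : seq {perm 'I_n}).
Local Open Scope group_scope.

Lemma prodRL_cat u v : prodRL (u ++ v) = prodRL v * prodRL u.
Proof.
elim: u => [|a u IH] /=; first by rewrite mulg1.
by rewrite /prodRL /= -/(prodRL _) IH mulgA.
Qed.

Lemma prodRL_cons a u : prodRL (a :: u) = prodRL u * a.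
Proof. by []. Qed.

Lemma prodRL_ins u v t : prodRL (u ++ t :: v) = prodRL (u ++ v) * (t ^ prodRL u).
Proof.
rewrite !prodRL_cat prodRL_cons conjgE !mulgA mulgK; done.
Qed.

Lemma mcount_tperm s a b :
  ncycles (s * tperm a b) + (a \notin porbit s b).*2 = ncycles s + (a != b).
Proof.
rewrite /ncycles -porbitsV invMg tpermV -(porbitV s b) porbits_mul_tperm porbitsV.
done.
Qed.

Lemma mcount1 : ncycles (1 : {perm 'I_n}) = n.
Proof.
rewrite /ncycles /porbits card_imset ?card_ord // => a b /eqP.
rewrite eq_porbit_mem => /porbitP [i]; rewrite permX.
by elim: i => [|i IH] //=; rewrite perm1.
Qed.

Lemma mcount_gt0 k s : 0 < ncycles s.
Proof. by rewrite /ncycles card_gt0; apply/set0Pn; exists (porbit s k); apply: imset_f. Qed.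

Lemma porbit_fix s y : s y = y -> porbit s y = [set y].
Proof.
move=> sy; apply/setP => a; rewrite inE; apply/idP/eqP => [/porbitP [i ->]|->].
  by rewrite permX; elim: i => //= i ->.
exact: porbit_id.
Qed.

Definition star k (g : {perm 'I_n}) : bool := [exists i : 'I_n, (i != k) && (g == tperm k i)].

Lemma split_pos k c w : all (star k) w -> (c = k \/ tperm k c \in w) ->
  exists u v, w = u ++ v /\ prodRL u k = c.
Proof.
move=> Hw Hc; have [->|ck] := eqVneq c k; first by exists [::], w; rewrite perm1.
case: Hc => [/eqP|]; first by rewrite (negbTE ck).
elim: w Hw => [|a w IH] //= /andP [/existsP [y /andP [yk /eqP ->]] Hw].
have [yc|yc] := eqVneq y c.
  by move=> _; exists [:: tperm k y], w; split => //; rewrite prodRL_cons mul1g yc tpermL.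
rewrite in_cons => /orP [/eqP e|Hin].
  by move: (congr1 (fun p : {perm 'I_n} => p k) e); rewrite !tpermL => yc'; by rewrite yc' eqxx in yc.
have [u [v [-> Hu]]] := IH Hw Hin.
exists (tperm k y :: u), v; split => //.
by rewrite prodRL_cons permM Hu tpermD // eq_sym.
Qed.

Lemma ins_pos k c z w : all (star k) w -> (c = k \/ tperm k c \in w) -> z != c ->
  exists u v, [/\ w = u ++ v, (prodRL u)^-1 z != k &
    prodRL (u ++ tperm k ((prodRL u)^-1 z) :: v) = prodRL w * tperm c z].
Proof.
move=> Hw Hc zc; have [u [v [-> Hu]]] := split_pos Hw Hc.
exists u, v; split => //.
  by apply: contra zc => /eqP e; rewrite -Hu -e permKV.
by rewrite prodRL_ins tpermJ permKV Hu.
Qed.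

Lemma subseq_one (T : eqType) (g d : seq T) : subseq g d -> size g < size d ->
  exists p e q, d = p ++ e :: q /\ subseq g (p ++ q).
Proof.
elim: d g => [|a d IH] [|b g] //=.
  by move=> _ _; exists [::], a, d; rewrite sub0seq.
case: eqP => [->|ba] H Hs.
  have [p [e [q [-> H']]]] := IH _ H Hs.
  by exists (a :: p), e, q; split => //=; rewrite eqxx.
by exists [::], a, d.
Qed.

Inductive chain : nat -> {perm 'I_n} -> {perm 'I_n} -> Prop :=
| ch0 x : chain 0 x x
| chS j x y (a b : 'I_n) : a != b -> chain j (x * tperm a b) y -> chain j.+1 x y.

Lemma del_chain k g d : all (star k) d -> subseq g d ->
  chain (size d - size g) (prodRL d) (prodRL g).
Proof.
move Hm: (size d - size g) => m; elim: m d Hm => [|m IH] d Hm Hd Hs.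
  have Hle : size d <= size g by move/eqP: Hm; rewrite subn_eq0.
  have Heq : size g = size d by apply/eqP; rewrite eqn_leq Hle (size_subseq Hs).
  have := (size_subseq_leqif Hs).2; rewrite Heq eqxx => /esym/eqP ->.
  constructor.
have Hlt : size g < size d by lia.
have [u [t [v [Ed Hs']]]] := subseq_one Hs Hlt; subst d.
have /allP Ht := Hd; have := Ht t; rewrite mem_cat in_cons eqxx orbT => /(_ isT).
move=> /existsP [y /andP [yk /eqP Et]].
have Hprod : prodRL (u ++ v) = prodRL (u ++ t :: v) * tperm (prodRL u k) (prodRL u y).
  by rewrite prodRL_ins -mulgA Et tpermJ tperm2 mulg1.
apply: (@chS m _ _ (prodRL u k) (prodRL u y)).
  by rewrite (inj_eq perm_inj) eq_sym.
rewrite -Hprod; apply: IH.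
- by move: Hm; rewrite !size_cat /=; lia.
- by move: Hd; rewrite !all_cat /= => /and3P [-> _ ->].
- done.
Qed.

Lemma mcount_step s a b : a != b ->
  (ncycles (s * tperm a b) = (ncycles s).+1 /\ a \in porbit s b) \/
  (ncycles (s * tperm a b)).+1 = ncycles s /\ a \notin porbit s b.
Proof.
move=> ab; have := mcount_tperm s a b; rewrite ab.
by case: (a \in porbit s b) => /= H; [left|right]; split => //; lia.
Qed.

Lemma chain_bound j x y : chain j x y -> ncycles x <= ncycles y + j.
Proof.
elim => [x0|j0 x0 y0 a b ab _ IH]; first by rewrite addn0.
case: (mcount_step x0 ab) => [[H _]|[H _]]; move: H IH;
  move: (ncycles (x0 * tperm a b)) => m0 H IH; lia.
Qed.

Lemma ins_chain k j x y : chain j x y -> ncycles x = ncycles y + j ->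
  forall g, is_star_fact k y g -> exists d, is_star_fact k x d /\ subseq g d.
Proof.
elim => [{}x _ g Hg|{}j {}x {}y a b ab Hc IH Hm g Hg]; first by exists g; rewrite subseq_refl.
have Hb := chain_bound Hc.
have [[H1 _]|[H1 Hout]] := mcount_step x ab; set m1 := ncycles (x * tperm a b) in Hb H1 *; first by lia.
have [d1 [Hd1 Hs1]] := IH ltac:(lia) g Hg.
move: Hd1 => /and4P [Hall Htr Hsz /eqP Hpr].
have Hall' : all (star k) d1 := Hall.
have Hc' : a = k \/ tperm k a \in d1.
  have [->|ak] := eqVneq a k; [by left | right].
  by move/forallP: Htr => /(_ a); rewrite ak.
have [u [v [Ed Hk Hp]]] := ins_pos (z := b) Hall' Hc' ltac:(by rewrite eq_sym).
exists (u ++ tperm k ((prodRL u)^-1 b) :: v); split; last first.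
  apply: subseq_trans Hs1 _; rewrite Ed cat_subseq ?subseq_refl //.
  exact: subseq_cons.
have n0 : 0 < n := leq_ltn_trans (leq0n _) (ltn_ord k).
have m0 := mcount_gt0 k (x * tperm a b).
apply/and4P; split.
- move: Hall; rewrite Ed !all_cat /= => /andP [-> ->]; rewrite andbT /=.
  by apply/existsP; exists ((prodRL u)^-1 b); rewrite Hk eqxx.
- apply/forallP => i; apply/implyP => ik; move/forallP: Htr => /(_ i).
  by rewrite ik Ed !mem_cat in_cons /= => /orP [->|->]; rewrite ?orbT.
- move/eqP: Hsz; rewrite Ed !size_cat /= => Hsz; apply/eqP; lia.
- by apply/eqP; rewrite Hp Hpr -mulgA tperm2 mulg1.
Qed.

Definition starS k (S : {set 'I_n}) (g : {perm 'I_n}) : bool :=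
  [exists i : 'I_n, (i \in S) && (g == tperm k i)].

Lemma prodRL_fix (y : 'I_n) u : all (fun g : {perm 'I_n} => g y == y) u -> prodRL u y = y.
Proof.
elim: u => [|a u IH]; first by rewrite /= perm1.
by move=> /andP [/eqP ay Hu]; rewrite prodRL_cons permM IH.
Qed.

Lemma starS_sub k (S1 S2 : {set 'I_n}) w : S1 \subset S2 ->
  all (starS k S1) w -> all (starS k S2) w.
Proof.
move=> sub /allP H; apply/allP => g /H /existsP [i /andP [iS e]].
by apply/existsP; exists i; rewrite e (subsetP sub).
Qed.

Lemma starS_star k (S : {set 'I_n}) w : k \notin S -> all (starS k S) w -> all (star k) w.
Proof.
move=> kS /allP H; apply/allP => g /H /existsP [i /andP [iS e]].
by apply/existsP; exists i; rewrite e andbT; apply: contraNneq kS => <-.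
Qed.

Lemma exist_aux k N : forall (S : {set 'I_n}) x, #|S| = N -> k \notin S ->
  (forall a, a \notin S -> a != k -> x a = a) ->
  exists w, [/\ all (starS k S) w, (forall i, i \in S -> tperm k i \in w),
     size w + n = (#|S|).*2 + ncycles x & prodRL w = x].
Proof.
elim: N => [|N IH] S x HS kS Hx.
  have S0 := cards0_eq HS; subst S.
  have x1 : x = 1.
    apply/permP => a; rewrite perm1.
    have [ak|ak] := eqVneq a k; last by apply: Hx; rewrite ?inE.
    subst a; apply/eqP; apply: contraT => xk.
    move: (Hx (x k) ltac:(by rewrite inE) xk) => /perm_inj e.
    by rewrite e eqxx in xk.
  exists [::]; split => //; first by move=> i; rewrite inE.
  by rewrite x1 mcount1 cards0.
have : 0 < #|S| by rewrite HS.
rewrite card_gt0 => /set0Pn [y yS].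
have HS' : #|S :\ y| = N by move: HS; rewrite (cardsD1 y S) yS add1n => -[].
have kS' : k \notin S :\ y by rewrite in_setD1 (negbTE kS) andbF.
have yk : y != k by apply: contraNneq kS => <-.
have cardS : #|S| = N.+1 := HS.
have [xy|xy] := eqVneq (x y) y.
  have Hx' : forall a, a \notin S :\ y -> a != k -> x a = a.
    move=> a; rewrite in_setD1 negb_and negbK => /orP [/eqP -> //|aS] ak.
    exact: Hx.
  have [w [Hw1 Hw2 Hw3 Hw4]] := IH _ _ HS' kS' Hx'.
  exists (tperm k y :: tperm k y :: w); split.
  - rewrite /= (starS_sub (subsetDl S [set y]) Hw1) andbT.
    by apply/andP; split; apply/existsP; exists y; rewrite yS eqxx.
  - move=> i iS; rewrite !in_cons; have [->|iy] := eqVneq i y; first by rewrite eqxx.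
    by rewrite Hw2 ?orbT // in_setD1 iy.
  - rewrite /= cardS; move: Hw3; rewrite HS'; lia.
  - by rewrite !prodRL_cons Hw4 -mulgA tperm2 mulg1.
pose c := x y.
have cy : c != y by [].
have cSk : c = k \/ c \in S :\ y.
  have [->|ck] := eqVneq c k; [by left|right].
  rewrite in_setD1 cy /=; apply: contraT => cS.
  move: (Hx c cS ck) => e; have : x c = x y by rewrite e.
  by move/(@perm_inj _ x) => e2; rewrite e2 eqxx in cy.
pose x' := x * tperm c y.
have Hx' : forall a, a \notin S :\ y -> a != k -> x' a = a.
  move=> a; rewrite in_setD1 negb_and negbK => /orP [/eqP ->|aS] ak.
    by rewrite /x' permM -/c tpermL.
  have ay : a != y by apply: contraNneq aS => ->.
  have xa := Hx a aS ak.
  have ac : a != c by apply: contraNneq ay => ac; apply/eqP; apply: (@perm_inj _ x); rewrite xa {1}ac.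
  by rewrite /x' permM xa tpermD // eq_sym.
have [w [Hw1 Hw2 Hw3 Hw4]] := IH _ _ HS' kS' Hx'.
have Hst : all (star k) w := starS_star kS' Hw1.
have Hc : c = k \/ tperm k c \in w by case: cSk => [->|/Hw2]; [left|right].
have [u [v [Ew Hk Hp]]] := ins_pos (z := y) Hst Hc ltac:(by rewrite eq_sym).
have Uy : (prodRL u)^-1 y = y.
  have : prodRL u y = y.
    apply: prodRL_fix; apply/allP => g gu.
    have /allP := Hw1; move=> /(_ g); rewrite Ew mem_cat gu => /(_ isT).
    move=> /existsP [i /andP [iS /eqP ->]]; rewrite tpermD // 1?eq_sym //.
    by apply/eqP => e; move: iS; rewrite -e in_setD1 eqxx.
  by move=> e; rewrite -{1}e permK.
rewrite Uy in Hp.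
exists (u ++ tperm k y :: v); split.
- move: Hw1; rewrite Ew !all_cat /= => /andP [H1 H2].
  rewrite (starS_sub (subsetDl S [set y]) H1) (starS_sub (subsetDl S [set y]) H2) andbT /=.
  by apply/existsP; exists y; rewrite yS eqxx.
- move=> i iS; have [->|iy] := eqVneq i y; first by rewrite mem_cat in_cons eqxx orbT.
  have := Hw2 i; rewrite in_setD1 iy iS Ew !mem_cat in_cons => /(_ isT) /orP [->|->] //.
  by rewrite !orbT.
- have Hfix : x' y = y by rewrite /x' permM -/c tpermL.
  have := mcount_tperm x' c y; rewrite porbit_fix // inE cy /= /x' -mulgA tperm2 mulg1.
  set m1 := ncycles x; set m2 := ncycles (x * tperm c y).
  move: Hw3; rewrite Ew !size_cat /= HS' cardS -/m2; lia.
- by rewrite Hp Hw4 /x' -mulgA tperm2 mulg1.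
Qed.
End S.

Lemma exists_fact n (k : 'I_n) (s : {perm 'I_n}) : exists w, is_star_fact k s w.
Proof.
have kS : k \notin [set~ k] by rewrite !inE eqxx.
have Hx : forall a, a \notin [set~ k] -> a != k -> s a = a.
  by move=> a; rewrite !inE negbK => ->.
have [w [H1 H2 H3 H4]] := exist_aux (erefl _) kS Hx.
have n0 : 0 < n := leq_ltn_trans (leq0n _) (ltn_ord k).
have m0 := mcount_gt0 k s.
exists w; apply/and4P; split.
- exact: (starS_star kS H1).
- by apply/forallP => i; apply/implyP => ik; apply: H2; rewrite !inE.
- move: H3; rewrite cardsC1 card_ord => H3; apply/eqP; move: H3 m0.
  move: (ncycles s) => m; lia.
- by apply/eqP.
Qed.

Lemma one_dir n (k k' : 'I_n) (sigma pi : {perm 'I_n}) :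
  star_le k sigma pi -> star_le k' sigma pi.
Proof.
move=> [g [d [Hg Hd Hs]]].
move: (Hg) (Hd) => /and4P [_ _ /eqP Sg /eqP Pg] /and4P [Ad _ /eqP Sd /eqP Pd].
have Ad' : all (star k) d := Ad.
have Hc := del_chain Ad' Hs; rewrite Pg Pd in Hc.
have Hle := size_subseq Hs.
have n0 : 0 < n := leq_ltn_trans (leq0n _) (ltn_ord k).
have m1 := mcount_gt0 k sigma; have m2 := mcount_gt0 k pi.
have Heq : ncycles pi = ncycles sigma + (size d - size g).
  move: Hle m1 m2; rewrite Sg Sd; move: (ncycles pi) (ncycles sigma) => a b; lia.
have [g' Hg'] := exists_fact k' sigma.
have [d' [Hd' Hs']] := ins_chain Hc Heq Hg'.
by exists g', d'.
Qed.

Theorem mainTheorem8 (n : nat) (k k' : 'I_n) (sigma pi : {perm 'I_n}) :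
  star_le k sigma pi <-> star_le k' sigma pi.
Proof. by split; apply: one_dir. Qed.
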